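(* Let $S$ be a dense subsemigroup of $((0,\infty),+)$, let $(X,\langle T_s\rangle_{s\in S})$ be a dynamical system and let $x,y\in X$. If $x$ and $y$ are proximal near zero, then there is a minimal left ideal $L$ of $O^{+}(S)$ such that $T_u(x)=T_u(y)$ for all $u\in L$.
   Context: ''Dense'' means dense in the usual topology of $(0,\infty)$. $\beta S$ is the Stone–Čech compactification of the discrete set $S$ (ultrafilters on $S$), with $+$ extended so that $(\beta S,+)$ is a compact right topological semigroup: $A\in p+q$ iff $\{x\in S:-x+A\in q\}\in p$, where $-x+A=\{y\in S:x+y\in A\}$. $O^{+}(S)=\{p\in\beta S: S\cap(0,\epsilon)\in p\text{ for every }\epsilon>0\}$, a compact right topological subsemigroup of $\beta S$. A dynamical system $(X,\langle T_s\rangle_{s\in S})$ consists of a compact Hausdorff space $X$ and continuous maps $T_s:X\to X$ with $T_s\circ T_t=T_{s+t}$. For $p\in\beta S$, $T_p(x)=p\text{-}\lim_{s\in S}T_s(x)$ (the continuous extension of $s\mapsto T_s$ to $\beta S$ into $X^X$); $T_p\circ T_q=T_{p+q}$. Points $x,y\in X$ are proximal near zero iff for every neighbourhood $U$ of the diagonal in $X\times X$ and every $\epsilon>0$ there exists $s\in S\cap(0,\epsilon)$ with $(T_s(x),T_s(y))\in U$. *)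

(* Defs.v *)
From Stdlib Require Import Reals List ClassicalEpsilon.
Open Scope R_scope.

Definition subsemigroup_pos (S : R -> Prop) : Prop :=
  (forall s, S s -> 0 < s) /\ (forall s t, S s -> S t -> S (s + t)).

Definition dense_pos (S : R -> Prop) : Prop :=
  forall a b, 0 < a -> a < b -> exists s, S s /\ a < s /\ s < b.

(* A subset A of S is represented by a predicate on R; an ultrafilter p on S
   is represented as a family of predicates on R that is an ultrafilter on R
   containing S (A in p iff A /\ S in p). *)
Definition is_ultrafilter (S : R -> Prop) (p : (R -> Prop) -> Prop) : Prop :=
  p S /\
  ~ p (fun _ => False) /\
  (forall A B : R -> Prop, p A -> (forall r, A r -> B r) -> p B) /\
  (forall A B : R -> Prop, p A -> p B -> p (fun r => A r /\ B r)) /\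
  (forall A : R -> Prop, p A \/ p (fun r => ~ A r)).

Definition uf_sum (S : R -> Prop) (p q : (R -> Prop) -> Prop) : (R -> Prop) -> Prop :=
  fun A => p (fun x => S x /\ q (fun y => A (x + y))).

Definition Oplus (S : R -> Prop) (p : (R -> Prop) -> Prop) : Prop :=
  is_ultrafilter S p /\
  forall eps, 0 < eps -> p (fun s => S s /\ 0 < s /\ s < eps).

Definition left_ideal (S : R -> Prop) (L : ((R -> Prop) -> Prop) -> Prop) : Prop :=
  (exists p, L p) /\
  (forall p, L p -> Oplus S p) /\
  (forall q p, Oplus S q -> L p -> L (uf_sum S q p)).

Definition minimal_left_ideal (S : R -> Prop) (L : ((R -> Prop) -> Prop) -> Prop) : Prop :=
  left_ideal S L /\
  forall L', left_ideal S L' -> (forall p, L' p -> L p) -> forall p, L p -> L' p.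

Definition is_topology {X : Type} (open : (X -> Prop) -> Prop) : Prop :=
  open (fun _ => True) /\ open (fun _ => False) /\
  (forall U V, open U -> open V -> open (fun z => U z /\ V z)) /\
  (forall F : (X -> Prop) -> Prop, (forall U, F U -> open U) ->
     open (fun z => exists U, F U /\ U z)).

Definition compact_space {X : Type} (open : (X -> Prop) -> Prop) : Prop :=
  forall F : (X -> Prop) -> Prop,
    (forall U, F U -> open U) -> (forall z, exists U, F U /\ U z) ->
    exists l : list (X -> Prop), (forall U, In U l -> F U) /\
                                 (forall z, exists U, In U l /\ U z).

Definition hausdorff {X : Type} (open : (X -> Prop) -> Prop) : Prop :=
  forall a b : X, a <> b -> exists U V, open U /\ open V /\ U a /\ V b /\
                                   (forall z, U z -> V z -> False).

Definition continuous {X : Type} (open : (X -> Prop) -> Prop) (f : X -> X) : Prop :=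
  forall U, open U -> open (fun z => U (f z)).

(* U is a neighbourhood of the diagonal in X x X (product topology):
   U contains an open set containing the diagonal, i.e. for each z a basic
   open rectangle around (z,z). *)
Definition diag_nbhd {X : Type} (open : (X -> Prop) -> Prop) (U : X -> X -> Prop) : Prop :=
  forall z, exists V W, open V /\ open W /\ V z /\ W z /\
                   (forall a b, V a -> W b -> U a b).

Definition dyn_system {X : Type} (open : (X -> Prop) -> Prop) (S : R -> Prop)
  (T : R -> X -> X) : Prop :=
  is_topology open /\ compact_space open /\ hausdorff open /\
  (forall s, S s -> continuous open (T s)) /\
  (forall s t z, S s -> S t -> T s (T t z) = T (s + t) z).

Definition is_plim {X : Type} (open : (X -> Prop) -> Prop) (S : R -> Prop)
  (p : (R -> Prop) -> Prop) (f : R -> X) (z : X) : Prop :=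
  forall U, open U -> U z -> p (fun s => S s /\ U (f s)).

(* T_p(x) = p-lim_{s in S} T_s(x)  (exists and is unique in a compact
   Hausdorff space; chosen by Hilbert's epsilon) *)
Definition Tp {X : Type} (open : (X -> Prop) -> Prop) (S : R -> Prop)
  (T : R -> X -> X) (p : (R -> Prop) -> Prop) (x : X) : X :=
  epsilon (inhabits x) (fun z => is_plim open S p (fun s => T s x) z).

Definition proximal_near_zero {X : Type} (open : (X -> Prop) -> Prop) (S : R -> Prop)
  (T : R -> X -> X) (x y : X) : Prop :=
  forall U, diag_nbhd open U -> forall eps, 0 < eps ->
    exists s, S s /\ 0 < s /\ s < eps /\ U (T s x) (T s y).

(* Main.v *)
Require Import Defs.
From Stdlib Require Import Reals List ClassicalEpsilon Classical FunctionalExtensionality PropExtensionality Lra.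
From mathcomp Require boolp classical_sets.
Open Scope R_scope.

Definition filt (S : R -> Prop) (G : (R -> Prop) -> Prop) : Prop :=
  G S /\ ~ G (fun _ => False) /\
  (forall A B : R -> Prop, G A -> (forall r, A r -> B r) -> G B) /\
  (forall A B : R -> Prop, G A -> G B -> G (fun r => A r /\ B r)).

Lemma uf_up S p A B : is_ultrafilter S p -> p A -> (forall r, A r -> B r) -> p B.
Proof. intros (_&_&H&_) ; eauto. Qed.
Lemma uf_meet S p A B : is_ultrafilter S p -> p A -> p B -> p (fun r => A r /\ B r).
Proof. intros (_&_&_&H&_) ; eauto. Qed.
Lemma uf_S S p : is_ultrafilter S p -> p S.
Proof. intros (H&_) ; eauto. Qed.
Lemma uf_nF S p : is_ultrafilter S p -> ~ p (fun _ => False).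
Proof. intros (_&H&_) ; eauto. Qed.
Lemma uf_ult S p A : is_ultrafilter S p -> p A \/ p (fun r => ~ A r).
Proof. intros (_&_&_&_&H) ; eauto. Qed.
Lemma uf_neg S p A : is_ultrafilter S p -> ~ p A -> p (fun r => ~ A r).
Proof. intros H n. destruct (uf_ult S p A H); tauto. Qed.
Lemma uf_ex S p A : is_ultrafilter S p -> p A -> exists r, A r.
Proof. intros H HA. apply NNPP; intro N. apply (uf_nF S p H).
  apply (uf_up S p A); auto. intros r Ar; apply N; eauto. Qed.

Lemma uf_sum_uf S p q : subsemigroup_pos S -> is_ultrafilter S q -> is_ultrafilter S p ->
  is_ultrafilter S (uf_sum S q p).
Proof.
intros [Spos Sadd] Hq Hp. unfold uf_sum. repeat split.
- apply (uf_up S q S); [auto|apply (uf_S S q Hq)|]. intros r Sr; split; auto.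
  apply (uf_up S p S); auto. apply (uf_S S p Hp).
- intro H. destruct (uf_ex S q _ Hq H) as [r [_ Hr]]. exact (uf_nF S p Hp Hr).
- intros A B HA HAB. apply (uf_up S q _ _ Hq HA). intros r [Sr Hr]. split; auto.
  apply (uf_up S p _ _ Hp Hr). intros; auto.
- intros A B HA HB. apply (uf_up S q _ _ Hq (uf_meet S q _ _ Hq HA HB)).
  intros r [[Sr H1] [_ H2]]. split; auto. apply (uf_meet S p _ _ Hp H1 H2).
- intro A. destruct (uf_ult S q (fun x => S x /\ p (fun y => A (x + y))) Hq) as [H|H]; [left; exact H| right].
  apply (uf_up S q _ _ Hq (uf_meet S q _ _ Hq (uf_S S q Hq) H)).
  intros r [Sr Hn]. split; auto. apply (uf_neg S); auto.
Qed.

Lemma oplus_sum S p q : subsemigroup_pos S -> Oplus S q -> Oplus S p -> Oplus S (uf_sum S q p).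
Proof.
intros HS [Hq Oq] [Hp Op]. split. apply uf_sum_uf; auto.
intros eps He. destruct HS as [Spos Sadd]. unfold uf_sum.
apply (uf_up S q _ _ Hq (Oq (eps/2) ltac:(lra))). intros u (Su & u0 & u1). split; auto.
apply (uf_up S p _ _ Hp (Op (eps/2) ltac:(lra))). intros v (Sv & v0 & v1).
split; [auto|lra].
Qed.

Lemma uf_ext_eq (a b : (R -> Prop) -> Prop) : (forall A, a A <-> b A) -> a = b.
Proof. intro H. apply functional_extensionality; intro A. apply propositional_extensionality; auto. Qed.

Lemma uf_sum_assoc S s q p : subsemigroup_pos S -> is_ultrafilter S s -> is_ultrafilter S q -> is_ultrafilter S p ->
  uf_sum S s (uf_sum S q p) = uf_sum S (uf_sum S s q) p.
Proof.
intros [Spos Sadd] Hs Hq Hp. apply uf_ext_eq. intro A. unfold uf_sum. split; intro H.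
- apply (uf_up S s _ _ Hs H). intros x [Sx Hx]. split; auto.
  apply (uf_up S q _ _ Hq Hx). intros z [Sz Hz]. split; auto.
  apply (uf_up S p _ _ Hp Hz). intros w Hw. rewrite Rplus_assoc; auto.
- apply (uf_up S s _ _ Hs H). intros x [Sx Hx]. split; auto.
  apply (uf_up S q _ _ Hq (uf_meet S q _ _ Hq (uf_S S q Hq) Hx)). intros z [Sz [_ Hz]]. split; auto.
  apply (uf_up S p _ _ Hp Hz). intros w Hw. rewrite <- Rplus_assoc; auto.
Qed.
Lemma zorn_prop (T : Type) (t0 : T) (Rl : T -> T -> Prop) :
  (forall t, Rl t t) -> (forall r s t, Rl r s -> Rl s t -> Rl r t) ->
  (forall A : T -> Prop, (forall s t, A s -> A t -> Rl s t \/ Rl t s) ->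
     exists t, forall s, A s -> Rl s t) ->
  exists t, forall s, Rl t s -> Rl s t.
Proof.
intros Hr Ht Hc.
destruct (@classical_sets.ZL_preorder T t0 (fun s t => boolp.asbool (Rl s t))) as [m Hm].
- intro t; apply boolp.asboolT; auto.
- intros r s t H1 H2; apply boolp.asboolT; eapply Ht; apply boolp.asboolW; eauto.
- intros A HA. destruct (Hc A) as [t Htt].
  + intros s t As At. destruct (HA s t As At) as [H|H]; [left|right]; apply boolp.asboolW; exact H.
  + exists t; intros s As; apply boolp.asboolT; auto.
- exists m; intros s H. apply boolp.asboolW. apply Hm. apply boolp.asboolT; exact H.
Qed.

Lemma uf_ext S G : filt S G -> exists p, is_ultrafilter S p /\ forall A, G A -> p A.
Proof.
intro HG.
set (T := { H : (R -> Prop) -> Prop | filt S H /\ forall A, G A -> H A }).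
set (t0 := exist (fun H => filt S H /\ forall A, G A -> H A) G (conj HG (fun A h => h)) : T).
destruct (zorn_prop T t0 (fun a b => forall A, proj1_sig a A -> proj1_sig b A)) as [[M [HM GM]] Hmax].
- auto.
- auto.
- intros Ch Htot. destruct (classic (exists h, Ch h)) as [[h0 Ch0]|Hn].
  + set (U := fun A => exists h, Ch h /\ proj1_sig h A).
    assert (HU : filt S U /\ forall A, G A -> U A).
    { split; [|intros A GA; exists h0; split; auto; apply (proj2 (proj2_sig h0)); auto].
      repeat split.
      - exists h0; split; auto. exact (proj1 (proj1 (proj2_sig h0))).
      - intros [h [_ Hh]]. exact (proj1 (proj2 (proj1 (proj2_sig h))) Hh).
      - intros A B [h [Ch1 Hh]] HAB. exists h; split; auto. exact (proj1 (proj2 (proj2 (proj1 (proj2_sig h)))) A B Hh HAB).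
      - intros A B [h [Ch1 Hh]] [h' [Ch2 Hh']]. destruct (Htot h h' Ch1 Ch2) as [L|L].
        + exists h'; split; auto. exact (proj2 (proj2 (proj2 (proj1 (proj2_sig h')))) A B (L A Hh) Hh').
        + exists h; split; auto. exact (proj2 (proj2 (proj2 (proj1 (proj2_sig h)))) A B Hh (L B Hh')). }
    exists (exist _ U HU). intros s Cs A HA. exists s; auto.
  + exists t0. intros s Cs. exfalso; eauto.
- exists M. simpl in *. split; [|auto].
  destruct HM as (MS & MF & Mup & Mmeet). repeat split; auto.
    intro A. destruct (classic (exists B, M B /\ forall r, B r -> A r -> False)) as [[B [MB HB]]|Hn].
  + right. apply (Mup B _ MB). intros r Br Ar; eauto.
  + left. set (M' := fun C => exists B, M B /\ forall r, B r -> A r -> C r).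
    assert (HM' : filt S M' /\ forall C, G C -> M' C).
    { split.
      - repeat split.
        + exists S; split; auto.
        + intros [B [MB HB]]. apply Hn; exists B; split; auto.
        + intros C D [B [MB HB]] HCD. exists B; split; auto.
        + intros C D [B [MB HB]] [B' [MB' HB']]. exists (fun r => B r /\ B' r); split; auto.
          intros r [? ?] ?; split; auto.
      - intros C GC. exists C; split; auto. }
    apply (Hmax (exist _ M' HM')); simpl.
    + intros C MC. exists C; split; auto.
    + exists S; split; auto.
Qed.

Lemma plim_unique {X : Type} (open : (X -> Prop) -> Prop) S p f z1 z2 :
  hausdorff open -> is_ultrafilter S p -> is_plim open S p f z1 -> is_plim open S p f z2 -> z1 = z2.
Proof.
intros Hh Hp H1 H2. apply NNPP; intro Hne. destruct (Hh z1 z2 Hne) as (U & V & oU & oV & Uz & Vz & D).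
destruct (uf_ex S p _ Hp (uf_meet S p _ _ Hp (H1 U oU Uz) (H2 V oV Vz))) as [r [[_ ?] [_ ?]]]. eauto.
Qed.

Lemma list_cover_notin {X : Type} S p (f : R -> X) (l : list (X -> Prop)) :
  is_ultrafilter S p -> (forall U, In U l -> ~ p (fun s => S s /\ U (f s))) ->
  ~ p (fun s => S s /\ exists U, In U l /\ U (f s)).
Proof.
intro Hp. induction l as [|U l IH]; intros Hl H.
- destruct (uf_ex S p _ Hp H) as [r [_ [U [[] _]]]].
- apply IH. intros; apply Hl; simpl; auto.
  assert (N := uf_neg S p _ Hp (Hl U (or_introl eq_refl))).
  apply (uf_up S p _ _ Hp (uf_meet S p _ _ Hp H N)).
  intros r [[Sr [U' [[e|iU'] HU']]] Hn].
  + subst. exfalso; auto.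
  + split; eauto.
Qed.

Lemma plim_exists {X : Type} (open : (X -> Prop) -> Prop) S p (f : R -> X) :
  compact_space open -> is_ultrafilter S p -> exists z, is_plim open S p f z.
Proof.
intros Hc Hp. apply NNPP; intro Hn.
destruct (Hc (fun U => open U /\ ~ p (fun s => S s /\ U (f s)))) as [l [Hl Hcov]].
- intros U [? _]; auto.
- intro z. apply NNPP; intro Hz. apply Hn. exists z. intros U oU Uz.
  apply NNPP; intro Hq. apply Hz. exists U; auto.
- apply (list_cover_notin S p f l Hp).
  + intros U iU; apply (Hl U iU).
  + apply (uf_up S p _ _ Hp (uf_S S p Hp)). intros r Sr; split; auto.
Qed.

Lemma Tp_spec {X : Type} (open : (X -> Prop) -> Prop) S T p z :
  compact_space open -> is_ultrafilter S p -> is_plim open S p (fun s => T s z) (Tp open S T p z).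
Proof.
intros Hc Hp. unfold Tp. apply epsilon_spec. apply plim_exists; auto.
Qed.

Lemma Tp_comp {X : Type} (open : (X -> Prop) -> Prop) S T q p x :
  subsemigroup_pos S -> dyn_system open S T -> is_ultrafilter S q -> is_ultrafilter S p ->
  Tp open S T (uf_sum S q p) x = Tp open S T q (Tp open S T p x).
Proof.
intros [Spos Sadd] (Ht & Hc & Hh & Hcont & Hlaw) Hq Hp.
assert (Hqp : is_ultrafilter S (uf_sum S q p)) by (apply uf_sum_uf; auto; split; auto).
apply (plim_unique open S (uf_sum S q p) (fun s => T s x)); auto.
- apply Tp_spec; auto.
- intros U oU HU. unfold uf_sum.
  apply (uf_up S q _ _ Hq (Tp_spec open S T q (Tp open S T p x) Hc Hq U oU HU)).
  intros u [Su Uu]. split; auto.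
  apply (uf_up S p _ _ Hp (Tp_spec open S T p x Hc Hp (fun z => U (T u z)) (Hcont u Su U oU) Uu)).
  intros v [Sv Hv]. split; auto. rewrite <- Hlaw; auto.
Qed.

Lemma open_inter_list {X : Type} (open : (X -> Prop) -> Prop) (a : X) (O : X -> Prop) (l : list (X -> Prop)) :
  is_topology open ->
  (forall U, In U l -> (forall t, U t -> O t) \/
      exists V', open V' /\ V' a /\ forall u, U u -> V' u -> False) ->
  exists V, open V /\ V a /\ forall U, In U l ->
     (forall t, U t -> O t) \/ (forall u, U u -> V u -> False).
Proof.
intros (oT & oF & oI & _). induction l as [|U l IH]; intro Hl.
- exists (fun _ => True); split; [exact oT|split; [exact I|intros U0 []]].
- destruct IH as (V & oV & Va & HV). { intros; apply Hl; simpl; auto. }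
  destruct (Hl U (or_introl eq_refl)) as [HU | (V' & oV' & V'a & D)].
  + exists V; repeat split; auto. intros U' [e|i]; [subst; left; auto | auto].
  + exists (fun z => V z /\ V' z); repeat split; auto.
    intros U' [e|i].
    * subst; right; intros u Uu [_ ?]; eauto.
    * destruct (HV U' i) as [?|D']; [left; auto| right; intros u Uu [? _]; eauto].
Qed.

Lemma regular {X : Type} (open : (X -> Prop) -> Prop) (a : X) (O : X -> Prop) :
  is_topology open -> compact_space open -> hausdorff open -> open O -> O a ->
  exists V, open V /\ V a /\ forall t, ~ O t -> exists N, open N /\ N t /\ forall u, N u -> V u -> False.
Proof.
intros Ht Hc Hh oO Oa.
destruct (Hc (fun U => open U /\ ((forall t, U t -> O t) \/
      exists V', open V' /\ V' a /\ forall u, U u -> V' u -> False))) as [l [Hl Hcov]].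
- intros U [? _]; auto.
- intro z. destruct (classic (O z)) as [Oz|nOz].
  + exists O; repeat split; auto.
  + assert (a <> z) by (intro e; subst; auto).
    destruct (Hh a z H) as (U1 & U2 & o1 & o2 & a1 & z2 & D).
    exists U2; repeat split; auto. right. exists U1; repeat split; auto. intros u u2 u1; eauto.
- destruct (open_inter_list open a O l Ht) as (V & oV & Va & HV).
  { intros U iU; apply (Hl U iU). }
  exists V; repeat split; auto. intros t nOt.
  destruct (Hcov t) as [U [iU Ut]]. exists U. split; [apply (Hl U iU)|split; [exact Ut|]].
  destruct (HV U iU) as [H|H]; auto.
Qed.

Lemma separate {X : Type} (open : (X -> Prop) -> Prop) (a b : X) :
  is_topology open -> compact_space open -> hausdorff open -> a <> b ->
  exists V W, open V /\ open W /\ V a /\ W b /\ diag_nbhd open (fun u v => ~ (V u /\ W v)).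
Proof.
intros Ht Hc Hh Hab. destruct (Hh a b Hab) as (Oa & Ob & oa & ob & aa & bb & D).
destruct (regular open a Oa Ht Hc Hh oa aa) as (V & oV & Va & HV).
destruct (regular open b Ob Ht Hc Hh ob bb) as (W & oW & Wb & HW).
destruct Ht as (oT & _).
exists V, W; repeat split; auto. intro z.
destruct (classic (Oa z)) as [Az|nAz].
- assert (nBz : ~ Ob z) by (intro; eauto).
  destruct (HW z nBz) as (N & oN & Nz & DN).
  exists (fun _ => True), N; repeat split; auto. intros u v _ Nv [_ Wv]; eauto.
- destruct (HV z nAz) as (N & oN & Nz & DN).
  exists N, (fun _ => True); repeat split; auto. intros u v Nu _ [Vu _]; eauto.
Qed.

Lemma step1 {X : Type} (open : (X -> Prop) -> Prop) S T x y :
  subsemigroup_pos S -> dyn_system open S T -> proximal_near_zero open S T x y ->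
  exists p, Oplus S p /\ Tp open S T p x = Tp open S T p y.
Proof.
intros HS Hd Hprox. pose proof Hd as (Ht & Hc & Hh & Hcont & Hlaw).
set (G := fun A : R -> Prop => exists U eps, diag_nbhd open U /\ 0 < eps /\
     forall r, S r /\ 0 < r /\ r < eps /\ U (T r x) (T r y) -> A r).
assert (dT : diag_nbhd open (fun _ _ : X => True)).
{ destruct Ht as (oT & _). intro z; exists (fun _ => True), (fun _ => True); repeat split; auto. }
destruct (uf_ext S G) as [p [Hp Gp]].
{ repeat split.
  - exists (fun _ _ => True), 1; repeat split; auto. lra. intros r [? _]; auto.
  - intros (U & eps & dU & e0 & H). destruct (Hprox U dU eps e0) as (s & Ss & s0 & s1 & Us).
    apply (H s); auto.
  - intros A B (U & eps & dU & e0 & H) HAB. exists U, eps; repeat split; auto.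
  - intros A B (U & eps & dU & e0 & H) (U' & eps' & dU' & e0' & H').
    exists (fun u v => U u v /\ U' u v), (Rmin eps eps').
    split; [| split; [apply Rmin_pos; auto|]].
    + intro z. destruct (dU z) as (V & W & oV & oW & Vz & Wz & HVW).
      destruct (dU' z) as (V' & W' & oV' & oW' & Vz' & Wz' & HVW').
      destruct Ht as (_ & _ & oI & _).
      exists (fun u => V u /\ V' u), (fun u => W u /\ W' u); repeat split; auto;
      repeat match goal with H : _ /\ _ |- _ => destruct H end; auto.
    + intros r (Sr & r0 & r1 & Hu1 & Hu2). split; [apply H|apply H']; repeat split; auto.
      * apply Rlt_le_trans with (1 := r1); apply Rmin_l.
      * apply Rlt_le_trans with (1 := r1); apply Rmin_r. }
exists p. split.
- split; auto. intros eps e0. apply Gp. exists (fun _ _ => True), eps; split; [exact dT|split; [exact e0|]].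
  intros r (? & ? & ? & _); auto.
- apply NNPP; intro Hne.
  destruct (separate open _ _ Ht Hc Hh Hne) as (V & W & oV & oW & Va & Wb & dVW).
  assert (H1 := Tp_spec open S T p x Hc Hp V oV Va).
  assert (H2 := Tp_spec open S T p y Hc Hp W oW Wb).
  assert (H3 : p (fun r => ~ (V (T r x) /\ W (T r y)))).
  { apply Gp. exists (fun u v => ~ (V u /\ W v)), 1; split; [exact dVW|split; [lra|]].
    intros r (_ & _ & _ & H); auto. }
  destruct (uf_ex S p _ Hp (uf_meet S p _ _ Hp H3 (uf_meet S p _ _ Hp H1 H2))) as [r [Hn [[_ ?] [_ ?]]]].
  auto.
Qed.

Definition Gof S (p : (R -> Prop) -> Prop) : (R -> Prop) -> Prop :=
  fun A => forall q, Oplus S q -> uf_sum S q p A.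
Definition hull S (G : (R -> Prop) -> Prop) : ((R -> Prop) -> Prop) -> Prop :=
  fun r => is_ultrafilter S r /\ forall A, G A -> r A.

Lemma lemK S p r : subsemigroup_pos S -> Oplus S p -> hull S (Gof S p) r ->
  exists q, Oplus S q /\ r = uf_sum S q p.
Proof.
intros HS [Hp Op] [Hr Gr].
set (Gq := fun C : R -> Prop => exists A eps, r A /\ 0 < eps /\
   forall x, S x /\ 0 < x /\ x < eps /\ p (fun y => A (x + y)) -> C x).
destruct (uf_ext S Gq) as [q [Hq Gqq]].
{ repeat split.
  - exists S, 1; split; [apply (uf_S S r Hr)|split; [lra|]]. intros x [? _]; auto.
  - intros (A & eps & rA & e0 & H). apply (uf_nF S r Hr).
    assert (HG : Gof S p (fun z => ~ A z)).
    { intros q Oq. unfold uf_sum. apply (uf_up S q _ _ (proj1 Oq) (proj2 Oq eps e0)).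
      intros x (Sx & x0 & x1). split; auto. apply (uf_neg S p _ Hp). intro Hpa.
      apply (H x); auto. }
    apply (uf_up S r _ _ Hr (uf_meet S r _ _ Hr rA (Gr _ HG))).
    intros z [? ?]; auto.
  - intros A B (C & eps & rC & e0 & H) HAB. exists C, eps; split; [auto|split; [auto|]].
    intros; auto.
  - intros A B (C & eps & rC & e0 & H) (C' & eps' & rC' & e0' & H').
    exists (fun z => C z /\ C' z), (Rmin eps eps'). split; [apply (uf_meet S r _ _ Hr rC rC')|].
    split; [apply Rmin_pos; auto|].
    intros x (Sx & x0 & x1 & Hx). split.
    + apply H. repeat split; auto. apply Rlt_le_trans with (1 := x1); apply Rmin_l.
      apply (uf_up S p _ _ Hp Hx). intros y [? ?]; auto.
    + apply H'. repeat split; auto. apply Rlt_le_trans with (1 := x1); apply Rmin_r.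
      apply (uf_up S p _ _ Hp Hx). intros y [? ?]; auto. }
assert (Oq : Oplus S q).
{ split; auto. intros eps e0. apply Gqq. exists (fun _ => True), eps.
  split; [apply (uf_up S r _ _ Hr (uf_S S r Hr)); auto|split; [auto|]].
  intros x (Sx & x0 & x1 & _). auto. }
exists q; split; auto.
assert (Hsub : forall A, r A -> uf_sum S q p A).
{ intros A rA. unfold uf_sum. apply Gqq. exists A, 1. split; [auto|split; [lra|]].
  intros x (Sx & _ & _ & H); auto. }
apply uf_ext_eq. intro A. split; [apply Hsub|]. intro H.
destruct (uf_ult S r A Hr) as [?|Hn]; auto.
exfalso. assert (Hqp := uf_sum_uf S p q HS Hq Hp).
apply (uf_nF S _ Hqp). apply (uf_up S _ _ _ Hqp (uf_meet S _ _ _ Hqp H (Hsub _ Hn))).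
intros z [? ?]; auto.
Qed.

Lemma sum_in_hull S q p : subsemigroup_pos S -> Oplus S q -> Oplus S p -> hull S (Gof S p) (uf_sum S q p).
Proof.
intros HS Oq Op. split.
- apply uf_sum_uf; auto; [apply Oq|apply Op].
- intros A HA. apply HA; auto.
Qed.

Lemma Gof_good S p : subsemigroup_pos S -> Oplus S p -> filt S (Gof S p) /\ left_ideal S (hull S (Gof S p)).
Proof.
intros HS Op. split.
- repeat split.
  + intros q Oq. apply uf_S. apply uf_sum_uf; auto; [apply Oq|apply Op].
  + intro H. assert (Hu : is_ultrafilter S (uf_sum S p p)) by (apply uf_sum_uf; auto; apply Op).
    apply (uf_nF S _ Hu). apply H; auto.
  + intros A B H HAB q Oq. apply (uf_up S _ _ _ (uf_sum_uf S p q HS (proj1 Oq) (proj1 Op)) (H q Oq)); auto.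
  + intros A B HA HB q Oq. apply (uf_meet S _ _ _ (uf_sum_uf S p q HS (proj1 Oq) (proj1 Op)) (HA q Oq) (HB q Oq)).
- split; [|split].
  + exists (uf_sum S p p). apply sum_in_hull; auto.
  + intros r Hr. destruct (lemK S p r HS Op Hr) as [q [Oq e]]. subst. apply oplus_sum; auto.
  + intros s r Os Hr. destruct (lemK S p r HS Op Hr) as [q [Oq e]]. subst.
    rewrite uf_sum_assoc; auto; [|apply Os|apply Oq|apply Op].
    apply sum_in_hull; auto. apply oplus_sum; auto.
Qed.

Lemma chain_filt S (C : ((R -> Prop) -> Prop) -> Prop) (h0 : (R -> Prop) -> Prop) :
  C h0 -> (forall h, C h -> filt S h) ->
  (forall h h', C h -> C h' -> (forall A, h A -> h' A) \/ (forall A, h' A -> h A)) ->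
  filt S (fun A => exists h, C h /\ h A).
Proof.
intros C0 Cf Ct. repeat split.
- exists h0; split; auto. apply (Cf h0 C0).
- intros [h [Ch Hh]]. exact (proj1 (proj2 (Cf h Ch)) Hh).
- intros A B [h [Ch Hh]] HAB. exists h; split; auto. exact (proj1 (proj2 (proj2 (Cf h Ch))) A B Hh HAB).
- intros A B [h [Ch Hh]] [h' [Ch' Hh']]. destruct (Ct h h' Ch Ch') as [L|L].
  + exists h'; split; auto. exact (proj2 (proj2 (proj2 (Cf h' Ch'))) A B (L A Hh) Hh').
  + exists h; split; auto. exact (proj2 (proj2 (proj2 (Cf h Ch))) A B Hh (L B Hh')).
Qed.

Theorem lemma2p9 (S : R -> Prop) (X : Type) (open : (X -> Prop) -> Prop)
  (T : R -> X -> X) (x y : X) :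
  subsemigroup_pos S -> dense_pos S -> dyn_system open S T ->
  proximal_near_zero open S T x y ->
  exists L, minimal_left_ideal S L /\
    forall u, L u -> Tp open S T u x = Tp open S T u y.
Proof.
intros HS _ Hd Hprox.
destruct (step1 open S T x y HS Hd Hprox) as [p0 [O0 E0]].
set (G0 := Gof S p0).
set (Good := fun G => filt S G /\ left_ideal S (hull S G) /\ forall A, G0 A -> G A).
destruct (Gof_good S p0 HS O0) as [F0 L0].
set (t0 := exist Good G0 (conj F0 (conj L0 (fun A h => h)))).
destruct (zorn_prop _ t0 (fun a b => forall A, proj1_sig a A -> proj1_sig b A)) as [[M [FM [LM GM]]] Hmax].
- auto.
- auto.
- intros Ch Htot. destruct (classic (exists h, Ch h)) as [[h0 Ch0]|Hn].
  + set (CC := fun G => exists h, Ch h /\ proj1_sig h = G).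
    set (U := fun A => exists h, CC h /\ h A).
    assert (FU : filt S U).
    { apply (chain_filt S CC (proj1_sig h0)).
      - exists h0; auto.
      - intros h [h' [Ch' e]]. subst. apply (proj1 (proj2_sig h')).
      - intros h h' [g [Cg e]] [g' [Cg' e']]. subst. apply Htot; auto. }
    assert (sub0 : forall A, proj1_sig h0 A -> U A).
    { intros A HA. exists (proj1_sig h0); split; auto. exists h0; auto. }
    assert (GU : Good U).
    { split; [exact FU|split].
      - split; [|split].
        + destruct (uf_ext S U FU) as [p [Hp Hpu]]. exists p; split; auto.
        + intros r [Hr Hru]. apply (proj1 (proj2 (proj1 (proj2 (proj2_sig h0))))).
          split; auto.
        + intros q r Oq [Hr Hru].
          assert (Or : Oplus S r).
          { apply (proj1 (proj2 (proj1 (proj2 (proj2_sig h0))))). split; auto. }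
          split; [apply (uf_sum_uf S r q HS (proj1 Oq) (proj1 Or))|].
          intros A [g [[h [Chh e]] HA]]. subst.
          assert (Hh := proj2 (proj2 (proj1 (proj2 (proj2_sig h)))) q r Oq).
          apply Hh; auto. split; auto. intros B HB. apply Hru. exists (proj1_sig h); split; auto.
          exists h; auto.
      - intros A HA. apply sub0. apply (proj2 (proj2 (proj2_sig h0))); auto. }
    exists (exist Good U GU). intros s Cs A HA. exists (proj1_sig s); split; auto. exists s; auto.
  + exists t0. intros s Cs. exfalso; eauto.
- simpl in *. exists (hull S M). split.
  + split; [exact LM|]. intros L' HL' Hsub r Hr.
    destruct HL' as [[p' Lp'] [LO LC]].
    assert (Op' : Oplus S p') by auto.
    destruct (Gof_good S p' HS Op') as [F' L1].
    assert (MG : forall A, M A -> Gof S p' A).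
    { intros A MA q Oq. apply (Hsub _ (LC q p' Oq Lp')); auto. }
    assert (G' : Good (Gof S p')).
    { split; [exact F'|split; [exact L1|]]. intros A HA; apply MG; apply GM; auto. }
    assert (Hb := Hmax (exist Good (Gof S p') G') MG). simpl in Hb.
    destruct Hr as [Hr Hrm].
    destruct (lemK S p' r HS Op') as [q [Oq e]].
    { split; auto. }
    subst. apply LC; auto.
  + intros u [Hu Hum].
    destruct (lemK S p0 u HS O0) as [q [Oq e]].
    { split; auto. }
    subst. rewrite !Tp_comp; auto; try apply Oq; try apply O0.
    rewrite E0; reflexivity.
Qed.
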